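(* Let $k=3$, $\lambda>0$ and $0<\theta<1$. Put $\theta_c(3)=1/2$ and, for $\theta<1/2$, $\lambda_{\rm cr}(3)=\frac{1}{2-4\theta}\bigl(\frac43\bigr)^3$. Then: (1) if $\theta\ge1/2$, there is exactly one TISGM; (2) if $\theta<1/2$: (2a) if $\lambda\le\lambda_{\rm cr}(3)$ there is exactly one TISGM (corresponding to the solution $(x^*,x^* )$); (2b) if $\lambda>\lambda_{\rm cr}(3)$ there are exactly three TISGMs, corresponding to $(x^*,x^* )$ and two solutions $(x_1^*,x_2^* )$, $(x_2^*,x_1^* )$ with $x_1^*\ne x_2^*$.
   Context: SCWR model on the Cayley tree of order $k$ (each vertex has $k$ direct successors), spins in $\{-1,0,1\}$, activity $\lambda>0$, $\theta=e^{-J\beta}$; ferromagnetic means $0<\theta<1$. TISGMs are in one-to-one correspondence with the solutions $(x,y)\in(0,\infty)^2$ of $x=\lambda\bigl(\frac{1+x+\theta y}{1+x+y}\bigr)^k$, $y=\lambda\bigl(\frac{1+\theta x+y}{1+x+y}\bigr)^k$; the number of TISGMs is the number of such solutions. $x^*$ is the unique positive solution of $x=\lambda\bigl(\frac{1+(1+\theta)x}{1+2x}\bigr)^k$. *)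

(* Defs.v *)
From Stdlib Require Import Reals Lra.
Open Scope R_scope.

(* Positive solutions (x,y) of the TISGM system for the SCWR model on the
   Cayley tree of order k; they are in bijection with the TISGMs. *)
Definition tisgm_sol (k : nat) (lam th x y : R) : Prop :=
  0 < x /\ 0 < y /\
  x = lam * ((1 + x + th * y) / (1 + x + y)) ^ k /\
  y = lam * ((1 + th * x + y) / (1 + x + y)) ^ k.

Definition is_xstar (k : nat) (lam th x : R) : Prop :=
  0 < x /\ x = lam * ((1 + (1 + th) * x) / (1 + 2 * x)) ^ k.

Definition theta_c3 : R := 1 / 2.
Definition lambda_cr3 (th : R) : R := (1 / (2 - 4 * th)) * (4 / 3) ^ 3.

(* Main.v *)
Require Import Defs.
From Stdlib Require Import Reals Lra Psatz.
Open Scope R_scope.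

Lemma cube_lt a b : 0 < b -> b < a -> b^3 < a^3.
Proof. intros. replace (a^3) with (b^3 + (a-b)*(a*a+a*b+b*b)) by ring.
  assert (0 < (a-b)*(a*a+a*b+b*b)) by (apply Rmult_lt_0_compat; nra). lra. Qed.

Lemma swap_sol lam th x y : tisgm_sol 3 lam th x y -> tisgm_sol 3 lam th y x.
Proof.
  intros [h1 [h2 [h3 h4]]]. repeat split; try lra.
  - replace (1 + y + th * x) with (1 + th * x + y) by ring.
    replace (1 + y + x) with (1 + x + y) by ring. exact h4.
  - replace (1 + th * y + x) with (1 + x + th * y) by ring.
    replace (1 + y + x) with (1 + x + y) by ring. exact h3.
Qed.

Lemma xstar_sol lam th x : is_xstar 3 lam th x <-> tisgm_sol 3 lam th x x.
Proof.
  unfold is_xstar, tisgm_sol.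
  replace (1 + x + th * x) with (1 + (1 + th) * x) by ring.
  replace (1 + th * x + x) with (1 + (1 + th) * x) by ring.
  replace (1 + x + x) with (1 + 2 * x) by ring.
  tauto.
Qed.

Lemma xstar_uniq lam th x1 x2 : 0 < lam -> 0 < th -> th < 1 ->
  is_xstar 3 lam th x1 -> is_xstar 3 lam th x2 -> x1 = x2.
Proof.
  intros hl h0 h1.
  assert (key : forall u v, is_xstar 3 lam th u -> is_xstar 3 lam th v -> ~ u < v).
  { intros u v [hu eu] [hv ev] huv.
    set (ru := (1 + (1 + th) * u) / (1 + 2 * u)) in eu.
    set (rv := (1 + (1 + th) * v) / (1 + 2 * v)) in ev.
    assert (hr : 0 < rv < ru).
    { unfold ru, rv. split.
      - apply Rdiv_lt_0_compat; nra.
      - apply Rminus_gt_0_lt.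
        replace ((1 + (1 + th) * u) / (1 + 2 * u) - (1 + (1 + th) * v) / (1 + 2 * v))
          with ((1 - th) * (v - u) / ((1 + 2 * u) * (1 + 2 * v))) by (field; lra).
        apply Rdiv_lt_0_compat; nra. }
    clearbody ru rv.
    pose proof (cube_lt ru rv (proj1 hr) (proj2 hr)). nra. }
  intros H1 H2. destruct (Rtotal_order x1 x2) as [h|[h|h]]; auto.
  - exfalso; exact (key _ _ H1 H2 h).
  - exfalso; exact (key _ _ H2 H1 h).
Qed.

Lemma xstar_exists lam th : 0 < lam -> 0 < th -> th < 1 -> exists x, is_xstar 3 lam th x.
Proof.
  intros hl h0 h1.
  set (f := fun x => x*(1+2*x)^3 - lam*(1+(1+th)*x)^3).
  assert (cf : continuity f) by (unfold f; reg).
  assert (f0 : f 0 < 0) by (unfold f; simpl; lra).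
  assert (fM : 0 < f (lam + 1)).
  { unfold f. set (M := lam + 1).
    assert (0 < 1 + (1+th)*M) by (unfold M; nra).
    assert (1 + (1+th)*M < 1 + 2*M) by (unfold M; nra).
    pose proof (cube_lt (1+2*M) (1+(1+th)*M) H H0).
    assert (0 < (1 + (1 + th) * M) ^ 3) by (apply pow_lt; lra).
    unfold M in *. nra. }
  destruct (IVT f 0 (lam+1) cf ltac:(lra) f0 fM) as [z [hz fz]].
  assert (zpos : 0 < z).
  { destruct hz as [hz _]. destruct (Rle_lt_or_eq_dec 0 z hz) as [h|h]; auto.
    subst z. lra. }
  exists z. split; auto. unfold f in fz.
  set (r := (1 + (1 + th) * z) / (1 + 2 * z)).
  assert (er : 1 + (1 + th) * z = r * (1 + 2 * z)) by (unfold r; field; lra).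
  rewrite er in fz. clearbody r.
  assert (0 < (1 + 2*z)^3) by (apply pow_lt; lra).
  apply (Rmult_eq_reg_r ((1 + 2 * z)^3)); [|lra].
  replace (lam * r ^ 3 * (1 + 2 * z) ^ 3) with (lam * (r * (1 + 2 * z)) ^ 3) by ring.
  lra.
Qed.

Lemma asym lam th x y : 0 < lam -> 0 < th -> th < 1 ->
  tisgm_sol 3 lam th x y -> x <> y ->
  exists a b, 0 < a /\ 0 < b /\ x = lam * a^3 /\ y = lam * b^3 /\
    1 + th < a + b /\ a + b < 3/2 /\
    lam * (a+b)^3 * (a+b-1-th) = 2*(a+b) - 1 /\
    a*b*(2*(a+b)-1) = (a+b)^2*((a+b)-1).
Proof.
  intros hl h0 h1 [hx [hy [ex ey]]] hxy.
  set (a := (1 + x + th * y) / (1 + x + y)) in ex.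
  set (b := (1 + th * x + y) / (1 + x + y)) in ey.
  assert (ha : 0 < a) by (unfold a; apply Rdiv_lt_0_compat; nra).
  assert (hb : 0 < b) by (unfold b; apply Rdiv_lt_0_compat; nra).
  assert (F1 : (1+x+y)*(a+b) = (1-th) + (1+th)*(1+x+y)) by (unfold a, b; field; lra).
  assert (F2 : (1+x+y)*(a-b) = (1-th)*(x-y)) by (unfold a, b; field; lra).
  clearbody a b.
  exists a, b.
  assert (F3 : x - y = lam*(a-b)*(a^2+a*b+b^2)).
  { rewrite ex, ey at 1. ring. }
  assert (hab : a - b <> 0).
  { intro e. apply hxy. assert (a = b) by lra. subst. lra. }
  assert (Fs : 1+x+y = (1-th)*lam*(a^2+a*b+b^2)).
  { apply (Rmult_eq_reg_r (a-b)); auto. rewrite F2, F3. ring. }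
  assert (F4 : x + y = lam*(a^3+b^3)) by lra.
  set (p := a + b) in *. set (q := a * b).
  assert (hp : 1 + th < p).
  { assert ((1+x+y)*(p-1-th) = 1 - th) by lra.
    destruct (Rle_or_lt p (1+th)); auto. nra. }
  assert (E1 : lam*(p-1-th)*(p^2 - q) = 1).
  { apply (Rmult_eq_reg_l (1-th)); [|lra].
    replace (a^2+a*b+b^2) with (p^2-q) in Fs by (unfold p, q; ring).
    transitivity ((1+x+y)*(p-1-th)); [rewrite Fs; ring | lra]. }
  assert (E2 : lam*(p-1-th)*(p^3 - 3*p*q) = 2 - p).
  { replace (a^3+b^3) with (p^3-3*p*q) in F4 by (unfold p, q; ring).
    transitivity ((x+y)*(p-1-th)); [rewrite F4; ring | lra]. }
  assert (HQ : p^3 - 3*p*q = (2-p)*(p^2-q)).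
  { rewrite <- E2. transitivity ((p^3-3*p*q)*(lam*(p-1-th)*(p^2-q))).
    rewrite E1; ring. ring. }
  assert (Hq : q*(2*p-1) = p^2*(p-1)).
  { assert (q*(2*p-1) - p^2*(p-1) = -(1/2)*((p^3-3*p*q) - (2-p)*(p^2-q))) by (unfold p, q; field).
    rewrite HQ in H. lra. }
  assert (Hd : (a-b)^2*(2*p-1) = p^2*(3-2*p)).
  { replace ((a-b)^2) with (p^2-4*q) by (unfold p, q; ring).
    transitivity (p^2*(2*p-1) - 4*(q*(2*p-1))); [ring|rewrite Hq; ring]. }
  assert (hp2 : p < 3/2).
  { assert (0 < (a-b)^2) by (destruct (Rtotal_order (a-b) 0) as [?|[?|?]]; [nra|lra|nra]).
    assert (0 < (a-b)^2*(2*p-1)) by (apply Rmult_lt_0_compat; lra).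
    destruct (Rle_or_lt (3/2) p); auto. nra. }
  assert (Hp3 : (p^2-q)*(2*p-1) = p^3).
  { transitivity (p^2*(2*p-1) - q*(2*p-1)); [ring|]. rewrite Hq. unfold p; ring. }
  repeat split; auto.
  - transitivity (lam*(p-1-th)*((p^2-q)*(2*p-1))).
    + rewrite Hp3. ring.
    + rewrite <- Rmult_assoc, E1. ring.
Qed.

Lemma mono th p1 p2 : 0 < th -> 1 + th < p1 -> p1 < p2 ->
  (2*p2-1)*p1^3*(p1-1-th) < (2*p1-1)*p2^3*(p2-1-th).
Proof.
  intros h0 h1 h2.
  assert (A : (2*p2-1)*p1^3 <= (2*p1-1)*p2^3).
  { assert (e : (2*p1-1)*p2^3 - (2*p2-1)*p1^3 =
       (p2-p1)*(p1*p1*(p2-1) + p2*p2*(p1-1) + p1*p1*p2 + p1*p2*p2 - p1*p2 )) by ring.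
    assert (0 <= p1*p1*(p2-1)) by (apply Rmult_le_pos; nra).
    assert (0 <= p2*p2*(p1-1)) by (apply Rmult_le_pos; nra).
    assert (p1*p2 <= p1*p1*p2) by nra.
    assert (0 <= (p2-p1)*(p1*p1*(p2-1) + p2*p2*(p1-1) + p1*p1*p2 + p1*p2*p2 - p1*p2 )).
    { apply Rmult_le_pos; nra. }
    lra. }
  assert (P : 0 < (2*p2-1)*p1^3) by (apply Rmult_lt_0_compat; [lra| apply pow_lt; lra]).
  assert (B : p1-1-th < p2-1-th) by lra.
  assert (0 < p1-1-th) by lra.
  apply Rlt_le_trans with ((2*p2-1)*p1^3*(p2-1-th)).
  - apply Rmult_lt_compat_l; auto.
  - apply Rmult_le_compat_r; lra.
Qed.

Lemma p_uniq lam th p p' : 0 < lam -> 0 < th -> 1 + th < p -> 1 + th < p' ->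
  lam * p^3 * (p-1-th) = 2*p - 1 -> lam * p'^3 * (p'-1-th) = 2*p' - 1 -> p = p'.
Proof.
  intros hl h0 hp hp' e e'.
  assert (key : forall u v, 1 + th < u -> u < v ->
     lam * u^3 * (u-1-th) = 2*u - 1 -> lam * v^3 * (v-1-th) = 2*v - 1 -> False).
  { intros u v hu huv eu ev. pose proof (mono th u v h0 hu huv).
    assert (lam*((2*v-1)*u^3*(u-1-th)) < lam*((2*u-1)*v^3*(v-1-th))) by (apply Rmult_lt_compat_l; auto).
    replace (lam*((2*v-1)*u^3*(u-1-th))) with ((2*v-1)*(lam*u^3*(u-1-th))) in H0 by ring.
    replace (lam*((2*u-1)*v^3*(v-1-th))) with ((2*u-1)*(lam*v^3*(v-1-th))) in H0 by ring.
    rewrite eu, ev in H0. lra. }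
  destruct (Rtotal_order p p') as [h|[h|h]]; auto; exfalso; eauto.
Qed.

Lemma roots_uniq a b a' b' : a + b = a' + b' -> a*b = a'*b' ->
  (a = a' /\ b = b') \/ (a = b' /\ b = a').
Proof.
  intros e1 e2.
  assert ((a-a')*(a-b') = 0).
  { replace ((a-a')*(a-b')) with (a*a - a*(a'+b') + a'*b') by ring.
    rewrite <- e1, <- e2. ring. }
  destruct (Rmult_integral _ _ H); [left|right]; lra.
Qed.

Lemma asym_exists lam th : 0 < lam -> 0 < th -> th < 1/2 -> lambda_cr3 th < lam ->
  exists x1 x2, x1 <> x2 /\ tisgm_sol 3 lam th x1 x2.
Proof.
  intros hl h0 h1 hcr.
  unfold lambda_cr3 in hcr.
  assert (hc : 2 < lam * (27/8) * (1/2 - th)).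
  { assert (0 < 2 - 4*th) by lra.
    assert (1/(2-4*th)*(4/3)^3 * (2-4*th) < lam * (2-4*th)) by (apply Rmult_lt_compat_r; lra).
    replace (1/(2-4*th)*(4/3)^3 * (2-4*th)) with ((4/3)^3) in H0 by (field; lra).
    simpl in H0. lra. }
  set (h := fun p => lam * p^3 * (p-1-th) - (2*p-1)).
  assert (ch : continuity h) by (unfold h; reg).
  assert (ha : h (1+th) < 0) by (unfold h; ring_simplify; lra).
  assert (hb : 0 < h (3/2)) by (unfold h; simpl; lra).
  destruct (IVT h (1+th) (3/2) ch ltac:(lra) ha hb) as [p [[hp1 hp2] hp]].
  assert (p1 : 1 + th < p) by (destruct (Rle_lt_or_eq_dec _ _ hp1); auto; subst; lra).
  assert (p2 : p < 3/2) by (destruct (Rle_lt_or_eq_dec _ _ hp2); auto; subst; lra).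
  unfold h in hp. clear h ch ha hb hp1 hp2.
  assert (Ep : lam * p^3 * (p-1-th) = 2*p-1) by lra.
  set (q := p^2*(p-1)/(2*p-1)).
  assert (Hq : q*(2*p-1) = p^2*(p-1)) by (unfold q; field; lra).
  assert (qpos : 0 < q) by (unfold q; apply Rdiv_lt_0_compat; [apply Rmult_lt_0_compat; [apply pow_lt|]|]; lra).
  assert (Dpos : 0 < p^2 - 4*q).
  { assert ((p^2-4*q)*(2*p-1) = p^2*(3-2*p)).
    { transitivity (p^2*(2*p-1) - 4*(q*(2*p-1))); [ring|rewrite Hq; ring]. }
    assert (0 < p^2*(3-2*p)) by (apply Rmult_lt_0_compat; nra).
    destruct (Rle_or_lt (p^2-4*q) 0); auto. nra. }
  clearbody q.
  set (d := sqrt (p^2 - 4*q)).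
  assert (dpos : 0 < d) by (apply sqrt_lt_R0; auto).
  assert (dd : d*d = p^2 - 4*q) by (apply sqrt_sqrt; lra).
  clearbody d.
  assert (dp : d < p) by nra.
  set (a := (p+d)/2). set (b := (p-d)/2).
  assert (sab : a + b = p) by (unfold a, b; field).
  assert (pab : a * b = q) by (unfold a, b; field_simplify; rewrite <- ?Rmult_assoc; nra).
  assert (ha : 0 < a) by (unfold a; lra).
  assert (hb : 0 < b) by (unfold a, b in *; lra).
  assert (hba : b < a) by (unfold a, b; lra).
  clearbody a b.
  set (L := lam*(p-1-th)).
  assert (Lpos : 0 < L) by (unfold L; nra).
  assert (E1 : L*(p^2-q) = 1).
  { apply (Rmult_eq_reg_r (2*p-1)); [|lra].
    transitivity (L*(p^2*(2*p-1) - q*(2*p-1))); [ring|]. rewrite Hq.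
    unfold L. transitivity (lam*p^3*(p-1-th)); [ring|]. rewrite Ep. ring. }
  assert (E2 : L*(p^3-3*p*q) = 2-p).
  { apply (Rmult_eq_reg_r (2*p-1)); [|lra].
    transitivity (L*(p^3*(2*p-1) - 3*p*(q*(2*p-1)))); [ring|]. rewrite Hq.
    unfold L. transitivity ((lam*p^3*(p-1-th))*(2-p)); [ring|]. rewrite Ep. ring. }
  set (x := lam*a^3). set (y := lam*b^3).
  assert (hx : 0 < x) by (unfold x; apply Rmult_lt_0_compat; auto; apply pow_lt; lra).
  assert (hy : 0 < y) by (unfold y; apply Rmult_lt_0_compat; auto; apply pow_lt; lra).
  assert (Exy : x + y = lam*(p^3-3*p*q)) by (unfold x, y; rewrite <- sab, <- pab; ring).
  assert (Emy : x - y = lam*(a-b)*(p^2-q)) by (unfold x, y; rewrite <- sab, <- pab; ring).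
  assert (S1 : (1+x+y)*(p-1-th) = 1 - th).
  { transitivity ((p-1-th) + L*(p^3-3*p*q)).
    - unfold L. transitivity ((p-1-th) + (x+y)*(p-1-th)); [ring| rewrite Exy; ring].
    - rewrite E2. ring. }
  assert (S2 : (1+x+y)*(a-b) = (1-th)*(x-y)).
  { apply (Rmult_eq_reg_r (p-1-th)); [|lra].
    transitivity ((a-b)*((1+x+y)*(p-1-th))); [ring|]. rewrite S1.
    rewrite Emy. transitivity ((1-th)*(a-b)*(L*(p^2-q))).
    - rewrite E1; ring.
    - unfold L; ring. }
  assert (spos : 0 < 1+x+y) by lra.
  assert (Ea : a = (1 + x + th*y)/(1+x+y)).
  { apply (Rmult_eq_reg_r (1+x+y)); [|lra].
    unfold Rdiv. rewrite Rmult_assoc, Rinv_l; [|lra].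
    apply (Rmult_eq_reg_l 2); [|lra].
    transitivity ((1+x+y)*(a+b) + (1+x+y)*(a-b)); [ring|].
    rewrite S2, sab. nra. }
  assert (Eb : b = (1 + th*x + y)/(1+x+y)).
  { apply (Rmult_eq_reg_r (1+x+y)); [|lra].
    unfold Rdiv. rewrite Rmult_assoc, Rinv_l; [|lra].
    apply (Rmult_eq_reg_l 2); [|lra].
    transitivity ((1+x+y)*(a+b) - (1+x+y)*(a-b)); [ring|].
    rewrite S2, sab. nra. }
  exists x, y. split.
  - unfold x, y. intro e.
    assert (b^3 < a^3) by (replace (a^3) with (b^3 + (a-b)*(a*a+a*b+b*b)) by ring;
      assert (0 < (a-b)*(a*a+a*b+b*b)) by (apply Rmult_lt_0_compat; nra); lra).
    nra.
  - unfold tisgm_sol. repeat split; auto.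
    + rewrite <- Ea. reflexivity.
    + rewrite <- Eb. reflexivity.
Qed.

Lemma asym_uniq lam th x y x' y' : 0 < lam -> 0 < th -> th < 1 ->
  tisgm_sol 3 lam th x y -> x <> y -> tisgm_sol 3 lam th x' y' -> x' <> y' ->
  (x' = x /\ y' = y) \/ (x' = y /\ y' = x).
Proof.
  intros hl h0 h1 s1 n1 s2 n2.
  destruct (asym lam th x y hl h0 h1 s1 n1) as [a [b [ha [hb [ex [ey [p1 [p2 [E Q]]]]]]]]].
  destruct (asym lam th x' y' hl h0 h1 s2 n2) as [a' [b' [ha' [hb' [ex' [ey' [p1' [p2' [E' Q']]]]]]]]].
  assert (ep : a + b = a' + b') by (apply (p_uniq lam th); auto).
  assert (eq : a * b = a' * b').
  { apply (Rmult_eq_reg_r (2*(a+b)-1)); [|lra]. rewrite Q. rewrite ep at 3. rewrite Q'.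
    rewrite ep. ring. }
  destruct (roots_uniq a b a' b' ep eq) as [[e1 e2]|[e1 e2]]; subst; [left|right]; auto.
Qed.

Lemma asym_big lam th x y : 0 < lam -> 0 < th -> th < 1 ->
  tisgm_sol 3 lam th x y -> x <> y -> th < 1/2 /\ 2 < lam * (27/8) * (1/2 - th).
Proof.
  intros hl h0 h1 s n.
  destruct (asym lam th x y hl h0 h1 s n) as [a [b [ha [hb [ex [ey [p1 [p2 [E Q]]]]]]]]].
  set (p := a + b) in *. clearbody p. split; [lra|].
  pose proof (mono th p (3/2) h0 p1 p2).
  assert (lam*((2*(3/2)-1)*p^3*(p-1-th)) < lam*((2*p-1)*(3/2)^3*(3/2-1-th))) by (apply Rmult_lt_compat_l; auto).
  replace (lam*((2*(3/2)-1)*p^3*(p-1-th))) with (2*(lam*p^3*(p-1-th))) in H0 by field.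
  replace (lam*((2*p-1)*(3/2)^3*(3/2-1-th))) with ((2*p-1)*(lam*(27/8)*(1/2-th))) in H0 by (simpl; field).
  rewrite E in H0.
  destruct (Rle_or_lt (lam * (27/8) * (1/2 - th)) 2); auto.
  assert ((2*p-1)*(lam * (27/8) * (1/2 - th)) <= (2*p-1)*2) by (apply Rmult_le_compat_l; lra).
  lra.
Qed.

Theorem mainTheorem7 (lam th : R) (hlam : 0 < lam) (hth0 : 0 < th) (hth1 : th < 1) :
  (* (1) *)
  (theta_c3 <= th ->
     exists x y, tisgm_sol 3 lam th x y /\
       forall x' y', tisgm_sol 3 lam th x' y' -> x' = x /\ y' = y) /\
  (* (2a) *)
  (th < theta_c3 -> lam <= lambda_cr3 th ->
     (exists xs, is_xstar 3 lam th xs) /\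
     forall xs, is_xstar 3 lam th xs ->
       forall x y, tisgm_sol 3 lam th x y <-> (x = xs /\ y = xs)) /\
  (* (2b) *)
  (th < theta_c3 -> lambda_cr3 th < lam ->
     (exists xs, is_xstar 3 lam th xs) /\
     forall xs, is_xstar 3 lam th xs ->
       exists x1 x2, x1 <> x2 /\
         forall x y, tisgm_sol 3 lam th x y <->
           ((x = xs /\ y = xs) \/ (x = x1 /\ y = x2) \/ (x = x2 /\ y = x1))).
Proof.
  unfold theta_c3.
  assert (sym : forall xs x, is_xstar 3 lam th xs -> tisgm_sol 3 lam th x x -> x = xs).
  { intros xs x hxs s. apply (xstar_uniq lam th); auto. apply xstar_sol; auto. }
  split; [|split].
  - intros hth. destruct (xstar_exists lam th hlam hth0 hth1) as [xs hxs].
    exists xs, xs. split; [apply xstar_sol; auto|].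
    intros x' y' s. destruct (Req_dec x' y') as [e|n].
    + subst y'. pose proof (sym xs x' hxs s). auto.
    + destruct (asym_big lam th x' y' hlam hth0 hth1 s n). lra.
  - intros hth hcr. split; [apply xstar_exists; auto|].
    intros xs hxs x y. split.
    + intros s. destruct (Req_dec x y) as [e|n].
      * subst y. pose proof (sym xs x hxs s). auto.
      * destruct (asym_big lam th x y hlam hth0 hth1 s n) as [_ hc].
        exfalso. unfold lambda_cr3 in hcr.
        assert (0 < 2 - 4*th) by lra.
        assert (lam * (2-4*th) <= 1/(2-4*th)*(4/3)^3 * (2-4*th)) by (apply Rmult_le_compat_r; lra).
        replace (1/(2-4*th)*(4/3)^3 * (2-4*th)) with ((4/3)^3) in H0 by (field; lra).
        simpl in H0. lra.
    + intros [e1 e2]; subst. apply xstar_sol; auto.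
  - intros hth hcr. split; [apply xstar_exists; auto|].
    intros xs hxs.
    destruct (asym_exists lam th hlam hth0 hth hcr) as [x1 [x2 [n12 s12]]].
    exists x1, x2. split; auto. intros x y. split.
    + intros s. destruct (Req_dec x y) as [e|n].
      * subst y. left. pose proof (sym xs x hxs s). auto.
      * right. apply (asym_uniq lam th x1 x2 x y); auto.
    + intros [[e1 e2]|[[e1 e2]|[e1 e2]]]; subst.
      * apply xstar_sol; auto.
      * auto.
      * apply swap_sol; auto.
Qed.
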